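(* Suppose $x\in X$ has $\deg(x)=i<\infty$ and fix any integer $n>i$. Then for every $m\geq0$ we have $\min_{j\geq m}\deg\big(T^j(x)_n\big)\leq i+1$.
   Context: Paths and cycles: a graph is $G=(V,E)$ with $V$ finite and $E\subset V\times V$. A path is a finite sequence of vertices $(u_0,\dots,u_L)$ with $(u_j,u_{j+1})\in E$; its length is $|\cdot|=L$; a cycle is a path with $u_0=u_L$. For paths where one ends where the next starts, $+$ denotes concatenation and $a\,c$ means the cycle $c$ traversed $a$ times. Construction: $G_0=(V_0,E_0)$ with $V_0=\{v_{0,0}\}$, $E_0=\{e_{0,0}\}$, $e_{0,0}=(v_{0,0},v_{0,0})$. For $n\geq1$, $G_n=(V_n,E_n)$ consists of a vertex $v_{n,0}$, the loop $e_{n,0}=(v_{n,0},v_{n,0})$, and $n$ cycles $c_{n,1},\dots,c_{n,n}$, each starting and ending at $v_{n,0}$, whose vertices other than $v_{n,0}$ are pairwise distinct (within each cycle and across cycles); $V_n$ is the set of all these vertices and $E_n$ consists of $e_{n,0}$ and the edges of the cycles. The maps $\varphi_n\colon V_{n+1}\to V_n$ and the lengths of the cycles $c_{n+1,i}$ are defined together: $\varphi_n(v_{n+1,0})=v_{n,0}$, and for each $i$ a path $P_{n,i}$ in $G_n$ from $v_{n,0}$ to $v_{n,0}$ is given; $c_{n+1,i}$ has length $|P_{n,i}|$ and $\varphi_n$ maps its $j$-th vertex to the $j$-th vertex of $P_{n,i}$ (written $\varphi_n(c_{n+1,i})=P_{n,i}$). The paths are: $P_{0,1}=10\,e_{0,0}$;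 for $n\geq1$: $P_{n,i}=e_{n,0}+2c_{n,i}+2c_{n,i+1}+\dots+2c_{n,n}+e_{n,0}$ for $2\leq i\leq n$; $P_{n,n+1}=(n+2)^2\big(\sum_{i=1}^n|c_{n,i}|\big)\,e_{n,0}$; and $P_{n,1}=(1\,e_{n,0}+2c_{n,1})+(2\,e_{n,0}+2c_{n,1})+\dots+(k_n\,e_{n,0}+2c_{n,1})+e_{n,0}+2c_{n,2}+\dots+2c_{n,n}+e_{n,0}$, where $k_n=2\big(1+\sum_{i=1}^n|c_{n,i}|\big)$. Let $X=\{x\in\prod_{n\geq0}V_n:\varphi_n(x_{n+1})=x_n\ \forall n\}$ with metric $d(x,y)=2^{-\min\{i:x_i\neq y_i\}}$ ($d(x,x)=0$); $X$ is a compact zero-dimensional metric space, and $T\colon X\to X$ defined by $T(x)=y$ iff $(x_n,y_n)\in E_n$ for all $n$ is a well-defined homeomorphism. Write $x_n$ for the $n$-th coordinate of $x$. Degree: for $v\in V_n$, $\deg(v)=+\infty$ if $v=v_{n,0}$ and $\deg(v)=i$ if $v$ is a vertex of $c_{n,i}$ different from $v_{n,0}$; for $x\in X$, $\deg(x)=\min_n\deg(x_n)$. *)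

(* Defs.v *)
From mathcomp Require Import all_boot.
From Stdlib Require Import ClassicalEpsilon.
Set Implicit Arguments. Unset Strict Implicit. Unset Printing Implicit Defensive.

(* Vertices of G_n are encoded as pairs of naturals:
   (0,0)  = the distinguished vertex v_{n,0};
   (i,j)  with 1 <= i <= n, 1 <= j < |c_{n,i}| = the j-th vertex of c_{n,i}
          (its 0-th and |c_{n,i}|-th vertices being v_{n,0}). *)
Definition vtx := (nat * nat)%type.
Definition ctr : vtx := (0, 0).

(* A path from v_{n,0} to v_{n,0} is encoded by its vertex list
   (u_0, ..., u_{L-1}) with its final vertex u_L = v_{n,0} omitted, so that
   concatenation is [++] and the length is [size]. *)

(* cycle c_{n,i} given the length list L = [|c_{n,1}|; ...; |c_{n,n}|] *)
Definition clen (L : seq nat) (i : nat) : nat := nth 0 L i.-1.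
Definition cyc (L : seq nat) (i : nat) : seq vtx :=
  ctr :: [seq (i, j) | j <- iota 1 (clen L i).-1].

Definition Ppath (n : nat) (L : seq nat) (i : nat) : seq vtx :=
  if n == 0 then nseq 10 ctr
  else if i == 1 then
    flatten [seq nseq k ctr ++ cyc L 1 ++ cyc L 1 | k <- iota 1 (2 * (1 + sumn L))]
      ++ [:: ctr] ++ flatten [seq cyc L l ++ cyc L l | l <- iota 2 (n - 1)] ++ [:: ctr]
  else if i <= n then
    [:: ctr] ++ flatten [seq cyc L l ++ cyc L l | l <- iota i (n - i + 1)] ++ [:: ctr]
  else nseq ((n + 2) ^ 2 * sumn L) ctr.

(* lens n = [|c_{n,1}|; ...; |c_{n,n}|] *)
Fixpoint lens (n : nat) : seq nat :=
  match n with
  | 0 => [::]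
  | n'.+1 => [seq size (Ppath n' (lens n') i) | i <- iota 1 n]
  end.

Definition len (n i : nat) : nat := clen (lens n) i.

Definition vert (n : nat) (v : vtx) : bool :=
  (v == ctr) || [&& 1 <= v.1 <= n & 1 <= v.2 < len n v.1].

(* edge set E_n : the loop e_{n,0} and the edges of the cycles c_{n,i} *)
Definition edge (n : nat) (u v : vtx) : bool :=
  [&& vert n u, vert n v &
    [|| (u == ctr) && (v == ctr),
        (u == ctr) && (v.2 == 1),
        [&& u.1 != 0, v.1 == u.1 & v.2 == u.2 + 1]
      | [&& u.1 != 0, v == ctr & u.2 + 1 == len n u.1]]].

Definition phi (n : nat) (v : vtx) : vtx :=
  if v == ctr then ctr else nth ctr (Ppath n (lens n) v.1) v.2.

Definition inX (x : nat -> vtx) : Prop :=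
  forall n, vert n (x n) /\ phi n (x n.+1) = x n.

Definition Trel (x y : nat -> vtx) : Prop := forall n, edge n (x n) (y n).

(* the map T (well defined on X, as stated in the paper); chosen by epsilon *)
Definition T (x : nat -> vtx) : nat -> vtx :=
  epsilon (inhabits x) (fun y => inX y /\ Trel x y).

(* degree of a vertex: None = +infinity *)
Definition vdeg (v : vtx) : option nat := if v == ctr then None else Some v.1.

Definition has_deg (x : nat -> vtx) (i : nat) : Prop :=
  (exists n, vdeg (x n) = Some i) /\ (forall n k, vdeg (x n) = Some k -> i <= k).

(* Main.v *)
Require Import Defs.
From mathcomp Require Import all_boot zify.
From Stdlib Require Import ClassicalEpsilon.
Set Implicit Arguments. Unset Strict Implicit. Unset Printing Implicit Defensive.

Lemma vert_ctr k : vert k ctr.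
Proof. by rewrite /vert eqxx. Qed.

Lemma edge_cc k : edge k ctr ctr.
Proof. by rewrite /edge vert_ctr eqxx. Qed.

Definition cl k (s : seq vtx) : bool :=
  (head ctr s == ctr) && path (edge k) ctr (rcons (behead s) ctr).

Lemma cl_nil k : cl k [::].
Proof. by []. Qed.

Lemma cl_cat k s1 s2 : cl k s1 -> cl k s2 -> cl k (s1 ++ s2).
Proof.
case: s1 => [|a s1] // /andP[/= /eqP -> H1].
case: s2 => [|b s2]; first by rewrite cats0 /cl /=.
rewrite {1}/cl => /andP[/= /eqP -> H2].
rewrite /cl /= rcons_cat /= cat_path.
move: H1; rewrite rcons_path => /andP[-> He] /=.
by rewrite He H2.
Qed.

Lemma cl_nseq k t : cl k (nseq t ctr).
Proof.
elim: t => [|t IH]; first exact: cl_nil.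
rewrite (_ : nseq t.+1 ctr = [:: ctr] ++ nseq t ctr) //.
apply: cl_cat => //; by rewrite /cl /= eqxx edge_cc.
Qed.

Lemma cl_flatten k (ss : seq (seq vtx)) : (forall s, s \in ss -> cl k s) -> cl k (flatten ss).
Proof.
elim: ss => [|s ss IH] H; first exact: cl_nil.
rewrite /=; apply: cl_cat; first by apply: H; rewrite inE eqxx.
by apply: IH => t Ht; apply: H; rewrite inE Ht orbT.
Qed.

Lemma edge_step k l a : 1 <= l <= k -> 1 <= a -> a.+1 < len k l -> edge k (l,a) (l,a.+1).
Proof. move=> *. rewrite /edge /vert /ctr !xpair_eqE /=. lia. Qed.
Lemma edge_last k l a : 1 <= l <= k -> 1 <= a -> a.+1 = len k l -> edge k (l,a) ctr.
Proof. move=> *. rewrite /edge /vert /ctr !xpair_eqE /=. lia. Qed.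
Lemma edge_first k l : 1 <= l <= k -> 1 < len k l -> edge k ctr (l,1).
Proof. move=> *. rewrite /edge /vert /ctr !xpair_eqE /=. lia. Qed.

Lemma cl_tail k l a c : 1 <= l <= k -> 1 <= a -> a + c + 1 = len k l ->
  path (edge k) (l, a) (rcons [seq (l, j) | j <- iota a.+1 c] ctr).
Proof.
move=> Hl; elim: c a => [|c IH] a Ha Hlen /=.
  by rewrite andbT; apply: edge_last => //; lia.
apply/andP; split; last by apply: IH => //; lia.
by apply: edge_step => //; lia.
Qed.

Lemma cl_cyc k l : 1 <= l <= k -> cl k (cyc (lens k) l).
Proof.
move=> Hl; rewrite /cl /cyc /=.
rewrite -/(len k l).
case E: (len k l) => [|[|c]] //=.
apply/andP; split; last by apply: cl_tail => //; lia.
by apply: edge_first => //; lia.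
Qed.

Lemma cl_one k : cl k [:: ctr].
Proof. exact: (cl_nseq k 1). Qed.

Lemma cl_P k l : 1 <= l -> cl k (Ppath k (lens k) l).
Proof.
move=> Hl; rewrite /Ppath.
case: eqP => [_|/eqP Hk]; first exact: cl_nseq.
case: eqP => [_|/eqP Hl1].
  apply: cl_cat; [|apply: cl_cat; [exact: cl_one|apply: cl_cat; [|exact: cl_one]]].
    apply: cl_flatten => s /mapP [t _ ->].
    by apply: cl_cat; [exact: cl_nseq|apply: cl_cat; apply: cl_cyc; lia].
  apply: cl_flatten => s /mapP [t Ht ->]; move: Ht; rewrite mem_iota => Ht.
  by apply: cl_cat; apply: cl_cyc; lia.
case: ifP => Hlk; last exact: cl_nseq.
apply: cl_cat; [exact: cl_one|apply: cl_cat; [|exact: cl_one]].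
apply: cl_flatten => s /mapP [t Ht ->]; move: Ht; rewrite mem_iota => Ht.
by apply: cl_cat; apply: cl_cyc; lia.
Qed.

Lemma nth_rcons_ctr (s : seq vtx) b : nth ctr (rcons s ctr) b = nth ctr s b.
Proof.
rewrite nth_rcons; case: ltnP => // H; case: eqP => // _.
all: by rewrite nth_default.
Qed.

Lemma cl_idx k s b : cl k s -> b < size s -> edge k (nth ctr s b) (nth ctr s b.+1).
Proof.
rewrite /cl; case: s => [|a s] // /andP[/= /eqP -> H] Hb.
move/(pathP ctr): H => H.
have := H b; rewrite size_rcons => /(_ Hb).
by rewrite -rcons_cons !nth_rcons_ctr.
Qed.

Lemma cl_head k s : cl k s -> nth ctr s 0 = ctr.
Proof. by rewrite /cl; case: s => [|a s] // /andP[/= /eqP]. Qed.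

Lemma lenE k l : 1 <= l <= k.+1 -> len k.+1 l = size (Ppath k (lens k) l).
Proof.
move=> Hl; rewrite /len /clen.
have -> : lens k.+1 = [seq size (Ppath k (lens k) i) | i <- iota 1 k.+1] by [].
rewrite (nth_map 0) ?size_iota; last lia.
rewrite nth_iota; last lia.
by have -> : 1 + l.-1 = l by lia.
Qed.

Lemma Psize2 k l : 2 <= size (Ppath k (lens k) l).
Proof.
rewrite /Ppath; case: eqP => [_|/eqP Hk]; first by rewrite size_nseq.
case: eqP => [_|_]; first by rewrite !size_cat /=; lia.
case: ifP => _; first by rewrite !size_cat /=; lia.
rewrite size_nseq.
case: k Hk => [//|k] _.
have Hs : 0 < size (Ppath k (lens k) 1).
  rewrite /Ppath; case: eqP => _; first by rewrite size_nseq.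
  rewrite /= !size_cat /=; lia.
have : 0 < sumn (lens k.+1) by rewrite /= addn_gt0 Hs.
move: (sumn _) => s Hs'. nia.
Qed.

Lemma len2 k l : 1 <= l <= k -> 2 <= len k l.
Proof.
case: k => [|k]; first lia.
by move=> Hl; rewrite lenE; [exact: Psize2|lia].
Qed.

Lemma phi_pair k a b : a != 0 -> phi k (a, b) = nth ctr (Ppath k (lens k) a) b.
Proof. by move=> Ha; rewrite /phi /ctr xpair_eqE (negbTE Ha). Qed.

Lemma phi_ctr k : phi k ctr = ctr.
Proof. by rewrite /phi eqxx. Qed.

Lemma vert_nctr k a b : vert k (a, b) -> a != 0 -> (1 <= a <= k) /\ (1 <= b < len k a).
Proof. rewrite /vert /ctr xpair_eqE /= => *; lia. Qed.

Lemma edge_phi k u v : edge k.+1 u v -> edge k (phi k u) (phi k v).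
Proof.
case: u => a b; case: v => c d.
move=> H; have := H; rewrite {1}/edge => /and3P [Hu Hv He].
case/or4P: He.
- by case/andP => /eqP -> /eqP ->; rewrite phi_ctr edge_cc.
- case/andP => /eqP -> /= /eqP Hd; subst d.
  have Hc : c != 0 by move: Hv; rewrite /vert /ctr xpair_eqE /=; lia.
  have [Hc1 Hc2] := vert_nctr Hv Hc.
  rewrite phi_ctr phi_pair //.
  have Hcl : cl k (Ppath k (lens k) c) by apply: cl_P; lia.
  rewrite -{1}(cl_head Hcl).
  apply: (cl_idx (b:=0) Hcl).
  by have := Psize2 k c; lia.
- case/and3P => /= Ha /eqP Hc /eqP Hd; subst c d.
  have [Ha1 Ha2] := vert_nctr Hu Ha.
  have [Hc1 Hc2] := vert_nctr Hv Ha.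
  rewrite !phi_pair // addn1; apply: cl_idx; first by apply: cl_P; lia.
  by rewrite -lenE; lia.
- case/and3P => /= Ha /eqP Hc /eqP Hd.
  have [Ha1 Ha2] := vert_nctr Hu Ha.
  rewrite Hc phi_ctr phi_pair //.
  have Hcl : cl k (Ppath k (lens k) a) by apply: cl_P; lia.
  have Hb : b < size (Ppath k (lens k) a) by rewrite -lenE; lia.
  have := cl_idx Hcl Hb; rewrite [nth _ _ b.+1]nth_default //.
  by rewrite -lenE; lia.
Qed.

Definition succ k (u : vtx) : vtx := if u.2.+1 < len k u.1 then (u.1, u.2.+1) else ctr.

Lemma edge_det k u v : edge k u v -> u != ctr -> v = succ k u.
Proof.
case: u => a b; case: v => c d => He Hu.
move: He; rewrite /edge => /and3P[Hu' Hv He]; case/or4P: He.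
- by move: Hu; rewrite /ctr !xpair_eqE /=; lia.
- by move: Hu; rewrite /ctr !xpair_eqE /=; lia.
- case/and3P => /= _ /eqP Hc /eqP Hd; subst c d.
  rewrite /succ /=; case: ifP; first by rewrite addn1.
  by move: Hv; rewrite /vert /ctr !xpair_eqE /=; lia.
- case/and3P => /= _ /eqP -> Hd.
  rewrite /succ /=; case: ifP => //.
  by move: Hd; lia.
Qed.

Lemma edge_succ k u : vert k u -> u != ctr -> edge k u (succ k u).
Proof.
case: u => a b; rewrite /succ /=.
case: ifP => H; rewrite /edge /vert /ctr !xpair_eqE /=; lia.
Qed.

Fixpoint down (t m : nat) (v : vtx) : vtx :=
  match t with 0 => v | t'.+1 => phi m (down t' m.+1 v) end.

Lemma downS t m v : down t.+1 m v = down t m (phi (m + t) v).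
Proof.
elim: t m => [|t IH] m; first by rewrite addn0.
change (phi m (down t.+1 m.+1 v) = phi m (down t m.+1 (phi (m + t.+1) v))).
by rewrite IH addSnnS.
Qed.

Lemma down_inX y : inX y -> forall t m, down t m (y (m + t)) = y m.
Proof.
move=> Hy; elim=> [|t IH] m; first by rewrite addn0.
change (phi m (down t m.+1 (y (m + t.+1))) = y m).
by rewrite -addSnnS IH (proj2 (Hy m)).
Qed.

Lemma down_edge t m u v : edge (m + t) u v -> edge m (down t m u) (down t m v).
Proof.
elim: t m => [|t IH] m; first by rewrite addn0.
move=> H; apply: edge_phi; apply: IH; by rewrite addSnnS.
Qed.

Lemma edge_vert k u v : edge k u v -> vert k u /\ vert k v.
Proof. by case/and3P. Qed.

Lemma T_spec x : inX x -> inX (T x) /\ Trel x (T x).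
Proof.
move=> Hx; rewrite /T; apply: (epsilon_spec (inhabits x) (fun y => inX y /\ Trel x y)).
case: (classic (exists N, x N != ctr)) => [[N HN]|Hn]; last first.
  exists x; split => // n.
  have -> : x n = ctr.
    apply/eqP; apply/negPn/negP => H; apply: Hn; by exists n.
  exact: edge_cc.
have Hup : forall d, x (N + d) != ctr.
  elim=> [|d IH]; first by rewrite addn0.
  apply/negP => /eqP H; move/negP: IH; apply.
  by rewrite -(proj2 (Hx (N + d))) -addnS H phi_ctr.
have Hge : forall l, N <= l -> x l != ctr.
  by move=> l Hl; rewrite -(subnKC Hl).
pose z l := succ l (x l).
have Hz : forall l, N <= l -> edge l (x l) (z l).
  by move=> l Hl; apply: edge_succ; [exact: (proj1 (Hx l))|exact: Hge].
have Hzphi : forall l, N <= l -> phi l (z l.+1) = z l.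
  move=> l Hl; have := edge_phi (Hz l.+1 (leqW Hl)).
  rewrite (proj2 (Hx l)) => /edge_det; apply; exact: Hge.
have HE : forall m, edge m (x m) (down N m (z (m + N))).
  move=> m; rewrite -{1}(down_inX Hx N m); apply: down_edge.
  by apply: Hz; rewrite leq_addl.
exists (fun m => down N m (z (m + N))); split => // m; split.
  exact: (proj2 (edge_vert (HE m))).
change (down N.+1 m (z (m.+1 + N)) = down N m (z (m + N))).
by rewrite downS addSn Hzphi // leq_addl.
Qed.

Lemma iter_inX x j : inX x -> inX (iter j T x).
Proof. by move=> Hx; elim: j => [|j IH] //=; exact: (proj1 (T_spec IH)). Qed.

Lemma mem_cyc L l v : v \in cyc L l -> v != ctr -> v.1 = l.
Proof. by rewrite /cyc inE => /orP[/eqP->|/mapP[j _ ->]] //; rewrite eqxx. Qed.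

Lemma mem_flat L a c v : v \in flatten [seq cyc L l ++ cyc L l | l <- iota a c] ->
  v != ctr -> a <= v.1.
Proof.
case/flattenP => s /mapP[l Hl ->]; rewrite mem_cat orbb => Hv Hn.
by rewrite (mem_cyc Hv Hn); move: Hl; rewrite mem_iota; lia.
Qed.

Lemma mem_P k L l v : v \in Ppath k L l -> v != ctr -> l <= v.1.
Proof.
move=> + Hn.
rewrite /Ppath; case: eqP => _; first by rewrite mem_nseq (negbTE Hn) andbF.
case: eqP => [->|_].
  rewrite mem_cat => /orP[Hv|].
    case/flattenP: Hv => s /mapP[t _ ->]; rewrite mem_cat => /orP[Hv|].
      by move: Hv; rewrite mem_nseq (negbTE Hn) andbF.
    by rewrite mem_cat => /orP[] Hv; rewrite (mem_cyc Hv Hn).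
  rewrite mem_cat => /orP[|]; first by rewrite inE (negbTE Hn).
  rewrite mem_cat => /orP[Hv|]; last by rewrite inE (negbTE Hn).
  by have := mem_flat Hv Hn; lia.
case: ifP => _; last by rewrite mem_nseq (negbTE Hn) andbF.
rewrite mem_cat => /orP[|]; first by rewrite inE (negbTE Hn).
rewrite mem_cat => /orP[Hv|]; last by rewrite inE (negbTE Hn).
exact: mem_flat Hv Hn.
Qed.

Lemma vert_fst k v : vert k v -> v != ctr -> (1 <= v.1 <= k) /\ (1 <= v.2 < len k v.1).
Proof. by rewrite /vert => /orP[/eqP->|H]; [rewrite eqxx|move=> _; lia]. Qed.

Lemma vdegE v k : vdeg v = Some k <-> v != ctr /\ v.1 = k.
Proof.
rewrite /vdeg; case: eqP => [->|/eqP H]; split => //=.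
- by case.
- by case=> ->.
- by case=> _ ->.
Qed.

Lemma deg_mono x k : inX x -> x k != ctr -> x k.+1 != ctr /\ (x k.+1).1 <= (x k).1.
Proof.
move=> Hx Hk.
have Hn : x k.+1 != ctr.
  by apply/negP => /eqP H; move/negP: Hk; apply; rewrite -(proj2 (Hx k)) H phi_ctr.
split=> //.
have [H1 H2] := vert_fst (proj1 (Hx k.+1)) Hn.
have Hm : x k \in Ppath k (lens k) (x k.+1).1.
  rewrite -(proj2 (Hx k)) /phi (negbTE Hn); apply: mem_nth; rewrite -lenE //; lia.
exact: mem_P Hm Hk.
Qed.

Lemma deg_up x i : inX x -> has_deg x i ->
  exists N, forall d, x (N + d) != ctr /\ (x (N + d)).1 = i.
Proof.
move=> Hx [[N /vdegE [HN1 HN2]] Hmin]; exists N.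
elim=> [|d [IH1 IH2]]; first by rewrite addn0.
have [H1 H2] := deg_mono Hx IH1.
rewrite addnS; split=> //.
have := Hmin (N + d).+1 (x (N + d).+1).1; rewrite vdegE => /(_ (conj H1 erefl)).
lia.
Qed.

Lemma orbit x K a b : inX x -> x K = (a, b) -> a != 0 ->
  forall j, b + j < len K a -> iter j T x K = (a, b + j).
Proof.
move=> Hx HK Ha; elim=> [|j IH] Hj; first by rewrite addn0.
have Hy := iter_inX j Hx.
have He := (proj2 (T_spec Hy)) K.
change (T (iter j T x) K = (a, b + j.+1)).
rewrite (edge_det He); last by rewrite IH; [rewrite /ctr xpair_eqE negb_and Ha|lia].
rewrite IH; last lia.
rewrite /succ /=; case: ifP => H; first by rewrite addnS.
lia.
Qed.

Lemma Pdec k l : 2 <= l <= k ->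
  exists R, Ppath k (lens k) l = ctr :: cyc (lens k) l ++ cyc (lens k) l ++ R.
Proof.
move=> Hl; rewrite /Ppath.
have -> : (k == 0) = false by apply/eqP; lia.
have -> : (l == 1) = false by apply/eqP; lia.
have -> : (l <= k) = true by lia.
have -> : k - l + 1 = (k - l).+1 by lia.
exists (flatten [seq cyc (lens k) l0 ++ cyc (lens k) l0 | l0 <- iota l.+1 (k - l)] ++ [:: ctr]).
by rewrite /= -!catA.
Qed.

Lemma flat_cons2 (f : nat -> seq vtx) a c :
  flatten [seq f l | l <- iota a c.+1] = f a ++ flatten [seq f l | l <- iota a.+1 c].
Proof. by []. Qed.

Lemma Pmain M i : 1 <= i < M -> exists A R,
  Ppath M (lens M) i = A ++ cyc (lens M) i.+1 ++ cyc (lens M) i.+1 ++ R /\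
  (forall v, v \in R -> v != ctr -> i.+1 < v.1).
Proof.
move=> Hi; rewrite /Ppath.
have -> : (M == 0) = false by apply/eqP; lia.
have HR : forall a c v, i.+2 <= a ->
    v \in flatten [seq cyc (lens M) l0 ++ cyc (lens M) l0 | l0 <- iota a c] ++ [:: ctr] ->
    v != ctr -> i.+1 < v.1.
  move=> a c v Ha; rewrite mem_cat => /orP[Hv Hn|]; last by rewrite inE => ->.
  by have := mem_flat Hv Hn; lia.
case: eqP => [Ei|Ei].
  subst i.
  have -> : M - 1 = (M - 2).+1 by lia.
  exists (flatten [seq nseq k ctr ++ cyc (lens M) 1 ++ cyc (lens M) 1 | k <- iota 1 (2 * (1 + sumn (lens M)))] ++ [:: ctr]).
  exists (flatten [seq cyc (lens M) l0 ++ cyc (lens M) l0 | l0 <- iota 3 (M - 2)] ++ [:: ctr]).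
  split; last by move=> v; apply: (HR 3 (M - 2) v).
  by rewrite (flat_cons2 _ 2 (M - 2)) -!catA.
have -> : (i <= M) = true by lia.
have -> : M - i + 1 = (M - i.+1).+2 by lia.
exists (ctr :: cyc (lens M) i ++ cyc (lens M) i).
exists (flatten [seq cyc (lens M) l0 ++ cyc (lens M) l0 | l0 <- iota i.+2 (M - i.+1)] ++ [:: ctr]).
split; last by move=> v; apply: (HR i.+2 (M - i.+1) v).
rewrite (flat_cons2 _ i (M - i.+1).+1) (flat_cons2 _ i.+1 (M - i.+1)) -!catA.
by rewrite cat_cons ?catA.
Qed.

Lemma size_cyc k l : size (cyc (lens k) l) = (len k l).-1.+1.
Proof. by rewrite /cyc /= size_map size_iota. Qed.

Lemma nth_cyc k l q : 1 <= q < len k l -> nth ctr (cyc (lens k) l) q = (l, q).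
Proof.
case: q => [|q] // Hq; rewrite /cyc /=.
rewrite (nth_map 0) ?size_iota; last by rewrite /len in Hq; lia.
by rewrite nth_iota ?add1n //; rewrite /len in Hq; lia.
Qed.

Lemma nth_consS (d x : vtx) s n : nth d (x :: s) n.+1 = nth d s n.
Proof. by []. Qed.

Lemma if_false_vtx (a b : vtx) : (if false then a else b) = b.
Proof. by []. Qed.

Lemma growth l t : 2 <= l -> t <= len (l + t) l.
Proof.
move=> Hl; elim: t => [|t IH] //.
rewrite addnS lenE; last lia.
have Hlt : 2 <= l <= l + t by lia.
have [R ->] := Pdec Hlt.
rewrite -cat1s !size_cat !size_cyc /=; lia.
Qed.

Lemma lemC l n : 2 <= l <= n -> forall t, exists q r,
  1 <= q < len (n + t) l /\ down t n (l, q) = (l, r).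
Proof.
move=> Hl; elim=> [|t [q [r [Hq Hd]]]].
  exists 1, 1; split=> //; rewrite addn0; have := len2 (k := n) (l := l); lia.
exists q.+1, r.
have Hlt : 2 <= l <= n + t by lia.
have [R HR] := Pdec Hlt.
split.
  rewrite addnS lenE; last lia.
  rewrite HR -cat1s !size_cat !size_cyc /=; lia.
rewrite downS phi_pair; last lia.
rewrite HR nth_consS nth_cat size_cyc.
have -> : q < (len (n + t) l).-1.+1 by lia.
by rewrite nth_cyc.
Qed.

Theorem lemma3p9 (x : nat -> vtx) (i n : nat) :
  inX x -> has_deg x i -> i < n ->
  forall m : nat, exists j : nat, m <= j /\
    exists k : nat, vdeg (iter j T x n) = Some k /\ k <= i.+1.
Proof.
move=> Hx Hdeg Hin m.
have Hi1 : 1 <= i.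
  case: Hdeg => [[N /vdegE [HN1 HN2]] _].
  have := vert_fst (proj1 (Hx N)) HN1; lia.
have [N0 HN] := deg_up Hx Hdeg.
pose M := i.+1 + (m + n + N0).
have HxS : x M.+1 != ctr /\ (x M.+1).1 = i.
  by have := HN (M.+1 - N0); rewrite subnKC //; rewrite /M; lia.
have HxM : x M != ctr /\ (x M).1 = i.
  by have := HN (M - N0); rewrite subnKC //; rewrite /M; lia.
case: HxS; case E: (x M.+1) => [a a'] /= Hn Ea; subst a.
have Hi0 : i != 0 by lia.
have Hvv := proj1 (Hx M.+1); rewrite E in Hvv.
have [Hv1 Hv2] := vert_nctr Hvv Hi0.
have HiM : 1 <= i < M by rewrite /M; lia.
have [A [R [HP HRm]]] := Pmain HiM.
set c := cyc (lens M) i.+1 in HP *.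
have HxMe : x M = nth ctr (Ppath M (lens M) i) a'.
  by rewrite -(proj2 (Hx M)) E phi_pair //; lia.
have Ha'A : a' < size A.
  rewrite ltnNge; apply/negP => Hge.
  have Hf : (a' < size A) = false by rewrite ltnNge Hge.
  have Hnth : nth ctr (A ++ c ++ c ++ R) a' = nth ctr (c ++ c ++ R) (a' - size A) by rewrite nth_cat Hf.
  move: HxM; rewrite HxMe HP Hnth => [[Hn' Hi']].
  case: (ltnP (a' - size A) (size (c ++ c ++ R))) => Hlt; last first.
    by move: Hn'; rewrite nth_default // eqxx.
  have := mem_nth ctr Hlt; rewrite !mem_cat => /or3P[] Hm.
  - by have := mem_cyc Hm Hn'; rewrite Hi'; lia.
  - by have := mem_cyc Hm Hn'; rewrite Hi'; lia.
  - by have := HRm _ Hm Hn'; rewrite Hi'; lia.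
have Hin' : 2 <= i.+1 <= n by lia.
have [q [r [Hq Hdown]]] := lemC Hin' (M - n).
have HnM : n + (M - n) = M by rewrite subnKC // /M; lia.
rewrite HnM in Hq.
have Hi2 : 2 <= i.+1 by lia.
have Hgrow := growth (m + n + N0) Hi2.
rewrite -/M in Hgrow.
have Hsc : size c = (len M i.+1).-1.+1 by rewrite size_cyc.
pose p := size A + size c + q.
exists (p - a'); split; first by rewrite /p; lia.
have HPs : size (Ppath M (lens M) i) = len M.+1 i by rewrite lenE //; lia.
have Hp : p < len M.+1 i by rewrite -HPs HP !size_cat /p; lia.
have Hpa : a' + (p - a') < len M.+1 i by lia.
have Horb := orbit Hx E Hi0 Hpa.
have Hy := iter_inX (p - a') Hx.
rewrite -(down_inX Hy (M - n) n) HnM.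
rewrite -(proj2 (Hy M)) Horb.
rewrite phi_pair; last lia.
have -> : a' + (p - a') = size A + (size c + q) by rewrite /p; lia.
have H1 : (size A + (size c + q) < size A) = false by lia.
have H2 : (q < size c) = true by lia.
have Hq' : nth ctr (A ++ c ++ c ++ R) (size A + (size c + q)) = (i.+1, q).
  have H3 : (size c + q < size c) = false by lia.
  rewrite nth_cat H1 addKn nth_cat H3 addKn nth_cat H2; exact: nth_cyc.
rewrite HP Hq' Hdown.
by exists i.+1; split=> //; apply/vdegE.
Qed.
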